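(* Let $E$ and $F$ be Banach spaces and $M>0$. If $d_N(E,F)<M^2$, then there exist a constant $L\ge 0$ and a bijective coarse $(M,L)$-quasi isometry $T:E\to F$.
   Context: A subset $N$ of a metric space $E$ is an $(\varepsilon,\delta)$-net if every point of $E$ is at distance less than $\varepsilon$ from some point of $N$ and any two distinct points of $N$ are at distance at least $\delta$; a net is an $(\varepsilon,\delta)$-net for some $\varepsilon,\delta>0$. For a Lipschitz map $T$, $l(T)=\sup\{d(Tx,Ty)/d(x,y):x\ne y\}$. The net distance $d_N(E,F)$ is the infimum of $l(T)\,l(T^{-1})$ over all bijections $T:N_E\to N_F$ between nets $N_E\subset E$, $N_F\subset F$ with $T,T^{-1}$ Lipschitz. A map $T:E\to F$ is a coarse $(M,L)$-quasi isometry if $\frac{1}{M}\|x-y\|-L\le\|Tx-Ty\|\le M\|x-y\|+L$ for all $x,y\in E$ and $T(E)$ is $\xi$-dense in $F$ for some $\xi>0$ (every point of $F$ is within distance $\xi$ of $T(E)$). *)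

(* Defs.v *)
From HB Require Import structures.
From mathcomp Require Import all_boot all_order all_algebra.
From mathcomp Require Import all_classical all_reals all_analysis.
Set Implicit Arguments. Unset Strict Implicit. Unset Printing Implicit Defensive.
Import Order.TTheory GRing.Theory Num.Theory.
Import numFieldNormedType.Exports.
Local Open Scope classical_set_scope.
Local Open Scope ring_scope.

Definition is_net (R : realType) (E : normedModType R) (N : set E) : Prop :=
  exists (eps delta : R), [/\ 0 < eps, 0 < delta,
    (forall x : E, exists2 y, N y & `|x - y| < eps) &
    (forall y z : E, N y -> N z -> y <> z -> delta <= `|y - z|)].

(* l(T) for T restricted to N: sup of the ratios d(Tx,Ty)/d(x,y), x <> y in N
   (with 0 added so that the sup of an empty family is 0 rather than -oo) *)
Definition lipc (R : realType) (E F : normedModType R) (N : set E) (T : E -> F)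
  : \bar R :=
  ereal_sup ([set 0%E] `|`
    [set r : \bar R | exists x y, [/\ N x, N y, x <> y &
       r = (`|T x - T y| / `|x - y|)%:E]]).

(* net distance d_N(E,F) : infimum of l(T) l(T^-1) over bijections
   T : N_E -> N_F between nets, with T and T^-1 Lipschitz.
   T is represented by f (restricted to N_E), T^-1 by g (restricted to N_F). *)
Definition net_dist (R : realType) (E F : normedModType R) : \bar R :=
  ereal_inf [set r : \bar R | exists (NE : set E) (NF : set F)
      (f : E -> F) (g : F -> E),
    [/\ is_net NE /\ is_net NF,
        ((forall x, NE x -> NF (f x)) /\ (forall y, NF y -> NE (g y))),
        ((forall x, NE x -> g (f x) = x) /\ (forall y, NF y -> f (g y) = y)),
        ((lipc NE f < +oo)%E /\ (lipc NF g < +oo)%E) &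
        r = (lipc NE f * lipc NF g)%E]].

Definition coarse_qi (R : realType) (E F : normedModType R) (M L : R)
  (T : E -> F) : Prop :=
  (forall x y : E, `|x - y| / M - L <= `|T x - T y| <= M * `|x - y| + L) /\
  (exists xi : R, 0 < xi /\ forall y : F, exists x : E, `|y - T x| <= xi).

(* Main.v *)
Require Import Defs.
From HB Require Import structures.
From mathcomp Require Import all_boot all_order all_algebra.
From mathcomp Require Import all_classical all_reals all_analysis.
From mathcomp Require Import ring lra.
Import Order.TTheory GRing.Theory Num.Theory.
Import numFieldNormedType.Exports.
Local Open Scope classical_set_scope.
Local Open Scope ring_scope.

Lemma zm (V : zmodType) (L S a1 a2 : V) : a1 - a2 = L - (S + a2) - (L - (S + a1)).
Proof.
rewrite opprB [RHS]addrC [RHS]addrA subrK.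
by rewrite opprD addrA [S + a1]addrC addrK.
Qed.

Lemma tail_bound (R : realType) (V : completeNormedModType R) (u : V ^nat)
  (c : R) m : cvgn (series u) ->
  (forall n, (m <= n)%N -> `|series u n - series u m| <= c) ->
  `|limn (series u) - series u m| <= c.
Proof.
move=> cu hb.
have cl : closed ((fun v : V => `|v - series u m|) @^-1` [set x : R | x <= c]).
  apply: preimage_closed; last exact: closed_le.
  move=> v _; apply: (@continuous_comp _ _ _ (fun v : V => v - series u m) (fun v : V => `|v|)); last exact: norm_continuous.
  apply: cvgB; [exact: cvg_id | exact: cvg_cst].
have := @closed_cvg nat V \oo _ (series u) _ cl.
apply; last exact: cu.
by exists m => // n /= hn; apply: hb.
Qed.

Lemma geo_sum_le (R : realType) (x : R) m d : 0 <= x < 1 ->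
  \sum_(m <= i < m + d) x ^+ i <= x ^+ m / (1 - x).
Proof.
case/andP=> x0 x1.
rewrite geometric_partial_tail geometric_seriesE ?lt_eqF //=.
rewrite ler_pM2r ?invr_gt0 ?subr_gt0 //.
rewrite ler_piMr ?exprn_ge0 // lerBlDr lerDl exprn_ge0 //.
Qed.

Lemma series_tail (R : realType) (V : normedModType R) (u : V ^nat)
  (x b : R) m n : 0 <= x < 1 -> 0 <= b -> (m <= n)%N ->
  (forall k, (m <= k)%N -> `|u k| <= b * x ^+ k) ->
  `|series u n - series u m| <= b * (x ^+ m / (1 - x)).
Proof.
move=> hx b0 mn hu.
rewrite sub_series_geq //.
apply: le_trans (ler_norm_sum _ _ _) _.
apply: le_trans (_ : \sum_(m <= k < n) b * x ^+ k <= _).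
  rewrite big_nat_cond [X in _ <= X]big_nat_cond.
  apply: ler_sum => k /andP[/andP[mk _] _]; exact: hu.
rewrite -mulr_sumr ler_wpM2l //.
by rewrite -(subnKC mn) geo_sum_le.
Qed.

Lemma series_cvg_geo (R : realType) (V : completeNormedModType R) (u : V ^nat)
  (x b : R) : 0 <= x < 1 -> (forall k, `|u k| <= b * x ^+ k) ->
  cvgn (series u).
Proof.
move=> /andP[x0 x1] hu; apply: normed_cvg.
have b0 : 0 <= b by have := hu 0%N; rewrite expr0 mulr1; apply: le_trans.
apply: (@series_le_cvg R _ (geometric b x)) => //.
- by move=> n /=.
- move=> n; rewrite /geometric /=; exact: mulr_ge0 (exprn_ge0 _ _).
- by apply: is_cvg_geometric_series; rewrite ger0_norm.
Qed.

Lemma enc_step (R : realType) (E : normedModType R) (P : E -> E) (ea : R) :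
  (forall x, `|x - P x| < ea) -> forall (x : E) k,
  `|P ((2:R) ^+ k.+1 *: x) - P (2 *: P ((2:R) ^+ k *: x))| <= 4 * ea.
Proof.
move=> hP x k.
set q := P ((2:R) ^+ k *: x).
have -> : P ((2:R) ^+ k.+1 *: x) - P (2 *: q) =
   - ((2:R) ^+ k.+1 *: x - P ((2:R) ^+ k.+1 *: x)) + 2 *: ((2:R) ^+ k *: x - q)
   + (2 *: q - P (2 *: q)).
  rewrite scalerBr scalerA -exprS; set y := (2:R) ^+ k.+1 *: x.
  rewrite opprB; set z := P y; set t := P (2 *: q).
  by rewrite (addrA (z - y)) subrK addrA subrK.
apply: le_trans; first exact: ler_normD.
apply: le_trans; first (apply: lerD; first exact: ler_normD); first exact: lexx.
rewrite normrN normrZ ger0_norm //.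
have h1 := hP ((2:R) ^+ k.+1 *: x); have h2 := hP ((2:R) ^+ k *: x);
have h3 := hP (2 *: q).
rewrite -/q in h2.
have -> : 4 * ea = ea + 2 * ea + ea by lra.
by apply: lerD; [apply: lerD; [exact: ltW | rewrite ler_pM2l // ltW] | exact: ltW].
Qed.

Lemma pow2_large (R : realType) (c z : R) : 0 < z -> exists k : nat, c < z * (2:R) ^+ k.
Proof.
move=> z0.
have [n hn] : exists n : nat, c / z < n%:R.
  have [c0|c0] := leP 0 (c / z).
    by exists (Num.bound (c / z)); apply: archi_boundP.
  by exists 0%N; rewrite (lt_le_trans c0).
exists n; rewrite -ltr_pdivrMl //.
rewrite mulrC; apply: (lt_le_trans hn).
have -> : (2:R) ^+ n = (2 ^ n)%:R by rewrite natrX.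
by rewrite ler_nat ltnW // ltn_expl.
Qed.

Lemma encode (R : realType) (E : normedModType R) (F : completeNormedModType R)
  (A : set E) (P : E -> E) (ea : R) (B : set F) (dl : R) (f0 : E -> F) (a : R) :
  (forall x, A (P x)) -> (forall x, `|x - P x| < ea) -> 0 < dl ->
  (forall y z, B y -> B z -> y <> z -> dl <= `|y - z|) ->
  (forall x, A x -> B (f0 x)) ->
  (forall x y, A x -> A y -> f0 x = f0 y -> x = y) ->
  0 <= a -> (forall x y, A x -> A y -> `|f0 x - f0 y| <= a * `|x - y|) ->
  exists i : E -> F, injective i /\ exists C : R, forall x, `|i x - f0 (P x)| <= C.
Proof.
move=> AP hP dl0 Bsep fAB finj a0 flip.
have ea0 : 0 < ea by apply: le_lt_trans (hP 0).
pose p k (x : E) := P ((2:R) ^+ k *: x).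
pose D (x : E) k := if k is k'.+1 then f0 (p k x) - f0 (P (2 *: p k' x))
                    else f0 (p 0%N x).
pose b := a * (4 * ea).
have b0 : 0 <= b by rewrite mulr_ge0 // mulr_ge0 // ltW.
have Dk : forall x k, `|D x k.+1| <= b.
  move=> x k; rewrite /D /b.
  apply: le_trans (flip _ _ (AP _) (AP _)) _.
  by rewrite ler_wpM2l //; apply: enc_step.
pose eta := dl / (dl + 4 * b + 1).
have den0 : 0 < dl + 4 * b + 1 by lra.
have eta0 : 0 < eta by rewrite divr_gt0.
have eta1 : eta < 1 by rewrite ltr_pdivrMr // mul1r; lra.
have etaI : 0 <= eta < 1 by rewrite ltW.
have etaK : 2 * b * (eta / (1 - eta)) < dl.
  have -> : eta / (1 - eta) = dl / (4 * b + 1).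
    have n1 : 4 * b + 1 != 0 by rewrite gt_eqF //; lra.
    have n2 : dl + 4 * b + 1 != 0 by rewrite gt_eqF //; lra.
    by rewrite /eta; field; rewrite n1 n2.
  rewrite mulrA ltr_pdivrMr; last lra.
  rewrite mulrC ltr_pM2l //; lra.
pose u x k := eta ^+ k *: D x k.
have hu1 : forall x k, (1 <= k)%N -> `|u x k| <= b * eta ^+ k.
  have e0 := exprn_ge0 _ (ltW eta0).
  move=> x [|k] // _; rewrite /u normrZ ger0_norm // mulrC.
  by rewrite ler_wpM2r.
have hu : forall x k, `|u x k| <= (`|D x 0%N| + b) * eta ^+ k.
  move=> x [|k].
    by rewrite /u expr0 scale1r mulr1 lerDl.
  apply: le_trans (hu1 x k.+1 isT) _.
  by rewrite ler_wpM2r ?exprn_ge0 ?(ltW eta0) // lerDr.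
have cv : forall x, cvgn (series (u x)) by move=> x; apply: series_cvg_geo etaI (hu x).
have tb : forall x m, (1 <= m)%N ->
   `|limn (series (u x)) - series (u x) m| <= b * (eta ^+ m / (1 - eta)).
  move=> x m m1; apply: tail_bound => // n mn.
  apply: series_tail => // k mk; apply: hu1; exact: leq_trans mk.
have s1 : forall x, series (u x) 1%N = f0 (P x).
  by move=> x; rewrite /series /= big_nat1 /u /D /p expr0 !scale1r.
exists (fun x => limn (series (u x))); split; last first.
  exists (b * (eta ^+ 1 / (1 - eta))) => x; rewrite -s1; exact: tb.
move=> x y /= exy.
have [allp|] := pselect (forall k, p k x = p k y).
  apply/eqP; apply: contraT => nxy.
  have z0 : 0 < `|x - y| by rewrite normr_gt0 subr_eq0.
  have [k hk] := @pow2_large R (2 * ea) _ z0.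
  have : `|(2:R) ^+ k *: (x - y)| < 2 * ea.
    have -> : (2:R) ^+ k *: (x - y) =
       ((2:R) ^+ k *: x - p k x) - ((2:R) ^+ k *: y - p k y).
      by rewrite allp scalerBr opprB addrA subrK.
    apply: le_lt_trans; first exact: ler_normB.
    have -> : 2 * ea = ea + ea by lra.
    by apply: ltrD; apply: hP.
  by rewrite normrZ ger0_norm ?exprn_ge0 // mulrC ltNge (ltW hk).
move=> /existsNP exk.
have exk' : exists k, p k x != p k y by case: exk => k hk; exists k; apply/eqP.
case: (ex_minnP exk') => k0 /eqP hk0 hmin.
have pe : forall k, (k < k0)%N -> p k x = p k y.
  move=> k kk; apply/eqP; apply: contraT => hk.
  by have := hmin _ hk; rewrite leqNgt kk.
have Se : series (u x) k0 = series (u y) k0.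
  rewrite /series /=; rewrite big_nat_cond [in RHS]big_nat_cond.
  apply: eq_bigr => k /andP[/andP[_ kk] _].
  rewrite /u /D; case: k kk => [|k] kk; first by rewrite pe.
  by rewrite !pe // ltnW.
have Dd : `|D x k0 - D y k0| = `|f0 (p k0 x) - f0 (p k0 y)|.
  rewrite /D; case: k0 hk0 hmin pe Se => [|k] // _ _ pe _.
  by rewrite (pe k (ltnSn k)) opprB addrA subrK.
have ge : dl <= `|D x k0 - D y k0|.
  rewrite Dd; apply: Bsep; try apply: fAB; try apply: AP.
  by move=> /finj => /(_ (AP _) (AP _)).
have key : `|u x k0 - u y k0| <= b * (eta ^+ k0.+1 / (1 - eta)) + b * (eta ^+ k0.+1 / (1 - eta)).
  have -> : u x k0 - u y k0 =
     (limn (series (u y)) - series (u y) k0.+1) - (limn (series (u x)) - series (u x) k0.+1).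
    by rewrite exy !seriesSr Se; apply: zm.
  apply: le_trans; first exact: ler_normB.
  by apply: lerD; apply: tb.
have : eta ^+ k0 * dl <= eta ^+ k0 * (2 * b * (eta / (1 - eta))).
  apply: le_trans (_ : `|u x k0 - u y k0| <= _).
    rewrite /u -scalerBr normrZ ger0_norm ?exprn_ge0 ?(ltW eta0) //.
    by rewrite ler_wpM2l ?exprn_ge0 ?(ltW eta0).
  apply: (le_trans key); rewrite exprS.
  have n1 : 1 - eta != 0 by rewrite gt_eqF //; lra.
  have -> : b * (eta * eta ^+ k0 / (1 - eta)) + b * (eta * eta ^+ k0 / (1 - eta)) =
     eta ^+ k0 * (2 * b * (eta / (1 - eta))) by field.
  exact: lexx.
rewrite ler_pM2l ?exprn_gt0 //.
by rewrite leNgt etaK.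
Qed.

Lemma SB (A B : Type) (i : A -> B) (j : B -> A) : injective i -> injective j ->
  exists h : A -> B, bijective h /\ forall x, h x = i x \/ j (h x) = x.
Proof.
move=> ii ij.
pose C := fix C n := if n is n.+1 then (j \o i) @` C n else ~` range j.
pose CC x := exists n, C n x.
have hx : forall x, exists y, (CC x /\ y = i x) \/ (~ CC x /\ j y = x).
  move=> x; have [cx|ncx] := pselect (CC x); first by exists (i x); left.
  have : ~ C 0%N x by move=> c0; apply: ncx; exists 0%N.
  move=> /=; rewrite /setC /= => /contrapT [y _ jy].
  by exists y; right.
have [h hh] := choice hx.
have hinj : injective h.
  move=> x x'.
  have [[cx ->]|[ncx jx]] := hh x; have [[cx' ->]|[ncx' jx']] := hh x' => //.
  - by apply: ii.
  - move=> e; exfalso; apply: ncx'; case: cx => n cn; exists n.+1.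
    by exists x => //=; rewrite e.
  - move=> e; exfalso; apply: ncx; case: cx' => n cn; exists n.+1.
    by exists x' => //=; rewrite -e.
  - by move=> e; rewrite -jx -jx' e.
have hsurj : forall y, exists x, h x = y.
  move=> y; have [cj|ncj] := pselect (CC (j y)).
    case: cj => -[|n] /=.
      by move=> /(_ (ex_intro2 _ _ y I erefl)).
    case=> x cx /= e; exists x; have := ij _ _ e => <-.
    by have [[_ ->]//|[nc _]] := hh x; exfalso; apply: nc; exists n.
  exists (j y); have [[c _]|[_ e]] := hh (j y); first by exfalso.
  exact: ij.
have [g hg] := choice hsurj.
exists h; split.
  exists g => x; [apply: hinj; exact: hg | exact: hg].
move=> x; have [[_ ->]|[_ ->]] := hh x; by [left | right].
Qed.

Lemma lipc_real (R : realType) (E F : normedModType R) (N : set E) (T : E -> F) :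
  (lipc N T < +oo)%E -> exists l : R, [/\ 0 <= l, lipc N T = l%:E &
    forall x y, N x -> N y -> `|T x - T y| <= l * `|x - y|].
Proof.
move=> fin.
have l0 : (0 <= lipc N T)%E by apply: ereal_sup_ubound; left.
have ub : forall x y, N x -> N y -> x <> y ->
    ((`|T x - T y| / `|x - y|)%:E <= lipc N T)%E.
  by move=> x y nx ny nxy; apply: ereal_sup_ubound; right; exists x, y.
move: fin l0 ub; case: (lipc N T) => [l| |] // _ l0 ub.
exists l; split => //.
move=> x y nx ny; have [->|nxy] := eqVneq x y; first by rewrite !subrr !normr0 mulr0.
have nxy' : x <> y by apply/eqP.
have := ub x y nx ny nxy'.
by rewrite lee_fin ler_pdivrMr // normr_gt0 subr_eq0.
Qed.

Lemma tri3 (R : numDomainType) (V : normedZmodType R) (p p' q' q : V) :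
  `|p - q| <= `|p - p'| + `|p' - q'| + `|q' - q|.
Proof.
apply: le_trans (ler_distD p' _ _) _; rewrite -addrA lerD2l.
exact: ler_distD.
Qed.
Arguments tri3 {R V}.

Theorem fact2 (R : realType) (E F : completeNormedModType R) (M : R) :
  0 < M -> (net_dist E F < (M ^+ 2)%:E)%E ->
  exists L : R, 0 <= L /\ exists T : E -> F, bijective T /\ coarse_qi M L T.
Proof.
move=> M0 /ereal_inf_lt [r [NE [NF [f [g [[netE netF] [fNF gNE] [gf fg] [lfin lgin] ->]]]]]] lt.
have [lf [lf0 lfE flip]] := @lipc_real R _ _ _ _ lfin.
have [lg [lg0 lgE glip]] := @lipc_real R _ _ _ _ lgin.
move: lt; rewrite lfE lgE -EFinM lte_fin => lt.
have [lam [lam0 alam blam]] : exists lam : R, [/\ 0 < lam, lf / lam <= M & lam * lg <= M].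
  have [lg00|lgp] := eqVneq lg 0.
    have q0 : 0 < lf / M + 1 by rewrite ltr_wpDl // divr_ge0 // ltW.
    exists (lf / M + 1); rewrite lg00 mulr0; split => //; last exact: ltW.
    rewrite ler_pdivrMr // mulrDr mulr1 mulrC divfK ?gt_eqF //.
    by rewrite lerDl; apply: ltW.
  have lgpos : 0 < lg by rewrite lt_def lgp lg0.
  exists (M / lg); split; first by rewrite divr_gt0.
    by rewrite invf_div mulrA ler_pdivrMr // -expr2; apply: ltW.
  by rewrite divfK ?gt_eqF.
case: netE => eE [dE [eE0 dE0 denE sepE]].
case: netF => eF [dF [eF0 dF0 denF sepF]].
have [PE hPE] : exists PE : E -> E, forall x, NE (PE x) /\ `|x - PE x| < eE.
  have h : forall x, exists y, NE y /\ `|x - y| < eE.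
    by move=> x; have [y ny hy] := denE x; exists y.
  by have [Q hQ] := choice h; exists Q.
have [PF hPF] : exists PF : F -> F, forall x, NF (PF x) /\ `|x - PF x| < eF.
  have h : forall x, exists y, NF y /\ `|x - y| < eF.
    by move=> x; have [y ny hy] := denF x; exists y.
  by have [Q hQ] := choice h; exists Q.
pose A := fun x : E => NE (lam^-1 *: x).
pose P := fun x : E => lam *: PE (lam^-1 *: x).
pose f0 := fun x : E => f (lam^-1 *: x).
pose g0 := fun y : F => lam *: g y.
have lamK : forall x : E, lam^-1 *: (lam *: x) = x.
  by move=> x; rewrite scalerA mulVf ?gt_eqF // scale1r.
have lamK' : forall x : E, lam *: (lam^-1 *: x) = x.
  by move=> x; rewrite scalerA mulfV ?gt_eqF // scale1r.
have AP : forall x, A (P x) by move=> x; rewrite /A /P lamK; case: (hPE (lam^-1 *: x)).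
have hP : forall x, `|x - P x| < lam * eE.
  move=> x; rewrite /P -{1}(lamK' x) -scalerBr normrZ gtr0_norm // ltr_pM2l //.
  by case: (hPE (lam^-1 *: x)).
have f0B : forall x, A x -> NF (f0 x) by move=> x; exact: fNF.
have g0A : forall y, NF y -> A (g0 y) by move=> y ny; rewrite /A /g0 lamK; exact: gNE.
have g0f0 : forall x, A x -> g0 (f0 x) = x by move=> x ax; rewrite /g0 /f0 gf.
have f0g0 : forall y, NF y -> f0 (g0 y) = y by move=> y ny; rewrite /g0 /f0 lamK fg.
have f0lip : forall x y, A x -> A y -> `|f0 x - f0 y| <= lf / lam * `|x - y|.
  move=> x y ax ay; apply: le_trans (flip _ _ ax ay) _.
  have li : 0 <= lam^-1 by rewrite invr_ge0; apply: ltW.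
  by rewrite -scalerBr normrZ (ger0_norm li) mulrA.
have g0lip : forall x y, NF x -> NF y -> `|g0 x - g0 y| <= lam * lg * `|x - y|.
  move=> x y nx ny; rewrite /g0 -scalerBr normrZ gtr0_norm // -mulrA ler_pM2l //.
  exact: glip.
have Asep : forall x y, A x -> A y -> x <> y -> lam * dE <= `|x - y|.
  move=> x y ax ay nxy; rewrite -(lamK' x) -(lamK' y) -scalerBr normrZ gtr0_norm //.
  rewrite ler_pM2l //; apply: sepE => // e; apply: nxy.
  by rewrite -(lamK' x) e lamK'.
have a0 : 0 <= lf / lam by rewrite divr_ge0 //; apply: ltW.
have b0 : 0 <= lam * lg by rewrite mulr_ge0 //; apply: ltW.
have [i [iinj [C1 hC1]]] := @encode R E F A P (lam * eE) NF dF f0 (lf / lam)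
  AP hP dF0 sepF f0B (fun x y ax ay e => etrans (esym (g0f0 x ax)) (etrans (f_equal g0 e) (g0f0 y ay)))
  a0 f0lip.
have PFA : forall y, NF (PF y) by move=> y; case: (hPF y).
have hPF' : forall y, `|y - PF y| < eF by move=> y; case: (hPF y).
have [j [jinj [C2 hC2]]] := @encode R F E NF PF eF A (lam * dE) g0 (lam * lg)
  PFA hPF' (mulr_gt0 lam0 dE0) Asep g0A
  (fun x y ax ay e => etrans (esym (f0g0 x ax)) (etrans (f_equal f0 e) (f0g0 y ay)))
  b0 g0lip.
have [h [hbij hh]] := @SB E F i j iinj jinj.
have C10 : 0 <= C1 by apply: le_trans (hC1 0).
pose K := C1 + (eF + lf / lam * (lam * eE + C2)).
have hK : forall x, `|h x - f0 (P x)| <= K.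
  have C20 : 0 <= C2 by apply: le_trans (hC2 0).
  have t0 : 0 <= eF + lf / lam * (lam * eE + C2).
    apply: addr_ge0; first exact: ltW.
    by apply: mulr_ge0 => //; apply: addr_ge0 => //; apply: mulr_ge0; apply: ltW.
  move=> x; case: (hh x) => [e|e].
    by rewrite e; apply: le_trans (hC1 x) _; rewrite lerDl.
  set y := h x in e *.
  apply: le_trans (_ : _ <= eF + lf / lam * (lam * eE + C2)) _; last by rewrite /K lerDr.
  apply: le_trans (ler_distD (PF y) _ _) _.
  apply: lerD; first by apply: ltW.
  rewrite -{1}(f0g0 _ (PFA y)).
  apply: le_trans (f0lip _ _ (g0A _ (PFA y)) (AP x)) _.
  rewrite ler_wpM2l //.
  apply: le_trans (ler_distD x _ _) _.
  rewrite addrC; apply: lerD; first by apply: ltW.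
  by rewrite distrC -{1}e.
have K0 : 0 <= K by apply: le_trans (hK 0).
have eps0 : 0 <= lam * eE by rewrite mulr_ge0 //; apply: ltW.
pose Q := (2 * (lam * lg) * K + 2 * (lam * eE)) / M.
have Q0 : 0 <= Q by rewrite divr_ge0 ?addr_ge0 ?mulr_ge0 //; apply: ltW.
have pp : forall x y, `|P x - P y| <= `|x - y| + 2 * (lam * eE).
  move=> x y; apply: le_trans (tri3 _ x y _) _.
  rewrite distrC; have := hP x; have := hP y; rewrite (distrC y).
  move=> h1 h2; lra.
exists (2 * (lf / lam) * (lam * eE) + 2 * K + Q); split.
  apply: addr_ge0 => //; apply: addr_ge0; [apply: mulr_ge0 => //; exact: mulr_ge0 | exact: mulr_ge0].
exists h; split => //; split; last first.
  exists 1; split => // y; case: hbij => hi h1 h2.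
  by exists (hi y); rewrite h2 subrr normr0.
move=> x y; apply/andP; split.
- have e1 := g0lip _ _ (f0B _ (AP x)) (f0B _ (AP y)); rewrite !g0f0 // in e1.
  have e2 : `|f0 (P x) - f0 (P y)| <= K + `|h x - h y| + K.
    apply: le_trans (tri3 _ (h x) (h y) _) _.
    by rewrite lerD ?lerD // distrC.
  have e3 : `|x - y| <= lam * eE + `|P x - P y| + lam * eE.
    apply: le_trans (tri3 _ (P x) (P y) _) _.
    rewrite lerD ?lerD //; first exact: ltW. rewrite distrC; exact: ltW.
  have e4 : lam * lg * `|f0 (P x) - f0 (P y)| <= lam * lg * (K + `|h x - h y| + K).
    by rewrite ler_wpM2l.
  have e5 : lam * lg * `|h x - h y| <= M * `|h x - h y| by rewrite ler_wpM2r.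
  have QM : Q * M = 2 * (lam * lg) * K + 2 * (lam * eE).
    by rewrite /Q divfK // gt_eqF.
  have : `|x - y| / M <= `|h x - h y| + Q.
    rewrite ler_pdivrMr // mulrDl QM.
    move: e1 e2 e3 e4 e5; set nxy := `|x - y|; set nh := `|h x - h y|.
    set fpp := `|f0 (P x) - f0 (P y)|; set b := lam * lg; set pq := `|P x - P y|.
    move=> e1 e2 e3 e4 e5; rewrite [nh * M]mulrC; lra.
  have : 0 <= 2 * (lf / lam) * (lam * eE) by rewrite mulr_ge0 // mulr_ge0.
  set c := 2 * (lf / lam) * (lam * eE); move=> c0 hq; lra.
- have fp : `|f0 (P x) - f0 (P y)| <= lf / lam * (`|x - y| + 2 * (lam * eE)).
    apply: le_trans (f0lip _ _ (AP x) (AP y)) _.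
    by rewrite ler_wpM2l.
  have : `|h x - h y| <= K + `|f0 (P x) - f0 (P y)| + K.
    apply: le_trans (tri3 _ (f0 (P x)) (f0 (P y)) _) _.
    by rewrite lerD ?lerD // distrC.
  have : lf / lam * `|x - y| <= M * `|x - y| by rewrite ler_wpM2r.
  move: fp; set nxy := `|x - y|; set nh := `|h x - h y|.
  set fpp := `|f0 (P x) - f0 (P y)|; set a := lf / lam.
  move=> h1 h2 h3; lra.
Qed.
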